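(* Let $G$ be a digraph with a fixed upward planar drawing and let $P$ and $Q$ be vertex disjoint directed paths in $G$. Then either $\mathrm{Right}(P)\cap Q=\emptyset$ or $\mathrm{Left}(P)\cap Q=\emptyset$.
   Context: An upward planar drawing of a digraph is a plane drawing (no edge crossings) in which every directed edge is a curve monotone increasing in the $y$-direction from tail to head. A path is identified with the set of points of $\mathbb{R}^2$ in its drawing. For a path $P$ with endpoints $(x,y)$ and $(x',y')$, $y\le y'$, define $\mathrm{Right}(P):=\{(u,v)\in\mathbb{R}^2: y\le v\le y' \text{ and } u'<u \text{ for all } u' \text{ with } (u',v)\in P\}$ and $\mathrm{Left}(P):=\{(u,v)\in\mathbb{R}^2: y\le v\le y' \text{ and } u'>u \text{ for all } u' \text{ with } (u',v)\in P\}$. *)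

(* Defs.v *)
From HB Require Import structures.
From mathcomp Require Import all_boot all_order all_algebra.
From mathcomp Require Import all_classical all_reals topology normedtype.
Set Implicit Arguments. Unset Strict Implicit. Unset Printing Implicit Defensive.
Import Order.TTheory GRing.Theory Num.Theory numFieldNormedType.Exports.
Local Open Scope classical_set_scope.
Local Open Scope ring_scope.

(* A drawing of a digraph (V, E): a position for every vertex and, for every
   ordered pair (u, v), a parametrized curve [0,1] -> R^2 (only meaningful
   when E u v). *)
Record drawing (R : realType) (V : finType) := Drawing {
  vpos : V -> R * R;
  ecurve : V -> V -> R -> R * R }.

Definition edge_img (R : realType) (V : finType) (D : drawing R V) (u v : V)
  : set (R * R) :=
  [set p | exists t : R, 0 <= t <= 1 /\ p = ecurve D u v t].

Definition upward_planar_drawing (R : realType) (V : finType) (E : rel V)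
  (D : drawing R V) : Prop :=
  injective (vpos D) /\
  (forall u v, E u v ->
     [/\ ecurve D u v 0 = vpos D u, ecurve D u v 1 = vpos D v,
         {within [set r : R | 0 <= r <= 1], continuous (ecurve D u v)} &
         forall s t : R, 0 <= s -> s < t -> t <= 1 ->
           (ecurve D u v s).2 < (ecurve D u v t).2]) /\
  (forall u v w t, E u v -> 0 < t < 1 -> ecurve D u v t <> vpos D w) /\
  (forall u1 v1 u2 v2 p, E u1 v1 -> E u2 v2 -> (u1, v1) <> (u2, v2) ->
     edge_img D u1 v1 p -> edge_img D u2 v2 p ->
     exists w, [/\ w \in [:: u1; v1], w \in [:: u2; v2] & p = vpos D w]).

Definition dipath (V : finType) (E : rel V) (x : V) (s : seq V) : bool :=
  path E x s && uniq (x :: s).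

Definition path_pts (R : realType) (V : finType) (D : drawing R V)
  (x : V) (s : seq V) : set (R * R) :=
  [set p | (exists2 v, v \in x :: s & p = vpos D v) \/
           (exists u v, (u, v) \in zip (x :: s) s /\ edge_img D u v p)].

Definition RightP (R : realType) (V : finType) (D : drawing R V)
  (x : V) (s : seq V) : set (R * R) :=
  [set q | (vpos D x).2 <= q.2 <= (vpos D (last x s)).2 /\
           forall q', path_pts D x s q' -> q'.2 = q.2 -> q'.1 < q.1].

Definition LeftP (R : realType) (V : finType) (D : drawing R V)
  (x : V) (s : seq V) : set (R * R) :=
  [set q | (vpos D x).2 <= q.2 <= (vpos D (last x s)).2 /\
           forall q', path_pts D x s q' -> q'.2 = q.2 -> q'.1 > q.1].

(* Main.v *)
Require Import Defs.
From HB Require Import structures.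
From mathcomp Require Import all_boot all_order all_algebra.
From mathcomp Require Import all_classical all_reals topology normedtype realfun.
From mathcomp Require Import ring lra.
Import Order.TTheory GRing.Theory Num.Theory numFieldNormedType.Exports.
Local Open Scope classical_set_scope.
Local Open Scope ring_scope.
Set Implicit Arguments. Unset Strict Implicit. Unset Printing Implicit Defensive.

Lemma fst_cont (R : realType) : continuous (@fst R R).
Proof. by move=> [a b]; exact: cvg_fst. Qed.
Lemma snd_cont (R : realType) : continuous (@snd R R).
Proof. by move=> [a b]; exact: cvg_snd. Qed.

Lemma within_comp2 {U V W : topologicalType} (A : set U) (B : set V)
  (f : U -> V) (g : V -> W) :
  (forall x, A x -> B (f x)) ->
  {within A, continuous f} -> {within B, continuous g} ->
  {within A, continuous (g \o f)}.
Proof.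
move=> AB /subspace_continuousP cf /subspace_continuousP cg.
apply/subspace_continuousP => x Ax.
apply: cvg_trans (cg _ (AB _ Ax)) => Y /= WN.
have := cf x Ax _ WN => /=.
move=> h; idtac.
apply: (@filterS _ (nbhs x) _ (fun z => A z -> B (f z) -> Y (g (f z)))); [by move=> z h1 Az; apply: h1 Az (AB _ Az) | exact: h].
Qed.

Definition gcurve (R : realType) (c : R -> R * R) :=
  {within [set r : R | 0 <= r <= 1], continuous c} /\
  forall s t : R, 0 <= s -> s < t -> t <= 1 -> (c s).2 < (c t).2.

Definition img (R : realType) (c : R -> R * R) : set (R * R) :=
  [set p | exists t : R, 0 <= t <= 1 /\ p = c t].

Lemma gc_le (R : realType) (c : R -> R * R) s t : gcurve c ->
  0 <= s -> s <= t -> t <= 1 -> (c s).2 <= (c t).2.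
Proof.
move=> [_ h] s0 st t1; case: (ltgtP s t) st => // [st _|-> _]; last by [].
exact/ltW/h.
Qed.

Lemma gc_inj (R : realType) (c : R -> R * R) s t : gcurve c ->
  0 <= s <= 1 -> 0 <= t <= 1 -> (c s).2 = (c t).2 -> s = t.
Proof.
move=> [_ h] /andP[s0 s1] /andP[t0 t1] e; case: (ltgtP s t) => // st.
  by have := h _ _ s0 st t1; rewrite e ltxx.
by have := h _ _ t0 st s1; rewrite e ltxx.
Qed.

Lemma img_eq (R : realType) (c : R -> R * R) p q : gcurve c ->
  img c p -> img c q -> p.2 = q.2 -> p = q.
Proof.
move=> gc [s [s01 ->]] [t [t01 ->]] e.
by rewrite (gc_inj gc s01 t01 e).
Qed.

Lemma itv_sub01 (R : realType) (a b : R) : 0 <= a -> b <= 1 ->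
  `[a, b]%classic `<=` [set r : R | 0 <= r <= 1].
Proof.
move=> a0 b1 r /=; rewrite in_itv /= => /andP[ar rb].
by apply/andP; split; [exact: le_trans ar | exact: le_trans b1].
Qed.

Lemma gc_cont2 (R : realType) (c : R -> R * R) (A : set R) : gcurve c ->
  A `<=` [set r : R | 0 <= r <= 1] ->
  {within A, continuous (fun t => (c t).2)}.
Proof.
move=> [cc _] sA.
apply: (@within_comp2 _ _ _ A setT c snd) => //.
  exact: continuous_subspaceW sA cc.
apply: continuous_subspaceT; exact: snd_cont.
Qed.

Lemma gc_cont1 (R : realType) (c : R -> R * R) (A : set R) : gcurve c ->
  A `<=` [set r : R | 0 <= r <= 1] ->
  {within A, continuous (fun t => (c t).1)}.
Proof.
move=> [cc _] sA.
apply: (@within_comp2 _ _ _ A setT c fst) => //.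
  exact: continuous_subspaceW sA cc.
apply: continuous_subspaceT; exact: fst_cont.
Qed.

Lemma curve_ivt (R : realType) (c : R -> R * R) t1 t2 h : gcurve c ->
  0 <= t1 <= 1 -> 0 <= t2 <= 1 ->
  ((c t1).2 - h) * ((c t2).2 - h) <= 0 ->
  exists t, 0 <= t <= 1 /\ (c t).2 = h.
Proof.
move=> gc.
wlog t12 : t1 t2 / t1 <= t2.
  move=> W H1 H2 Hp; case: (lerP t1 t2) => t12.
    exact: (W t1 t2 t12 H1 H2 Hp).
  by apply: (W t2 t1 (ltW t12) H2 H1); rewrite mulrC.
move=> /andP[t10 t11] /andP[t20 t21] Hp.
have [|t] := @IVT R (fun t => (c t).2) t1 t2 h t12 (gc_cont2 gc (itv_sub01 t10 t21)).
  rewrite ge_min le_max.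
  case: (lerP (c t1).2 h) => /= H1; case: (lerP h (c t2).2) => /= H2;
    rewrite ?orbT ?andbT ?orbF /=; try done; try (apply/andP; split); nra.
rewrite in_itv /= => /andP[a b] e; exists t; split => //.
by apply/andP; split; [exact: le_trans a | exact: le_trans t21].
Qed.

Lemma core (R : realType) (c d : R -> R * R) t1 t2 s1 s2 :
  gcurve c -> gcurve d ->
  0 <= t1 <= 1 -> 0 <= t2 <= 1 -> 0 <= s1 <= 1 -> 0 <= s2 <= 1 ->
  (d s1).2 = (c t1).2 -> (d s2).2 = (c t2).2 ->
  ((d s1).1 - (c t1).1) * ((d s2).1 - (c t2).1) < 0 ->
  exists t s, [/\ 0 <= t <= 1, 0 <= s <= 1 & c t = d s].
Proof.
move=> gc gd.
wlog t12 : t1 t2 s1 s2 / t1 <= t2.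
  move=> W H1 H2 H3 H4 H5 H6 Hp; case: (lerP t1 t2) => t12.
    exact: (W t1 t2 s1 s2 t12).
  by apply: (W t2 t1 s2 s1 (ltW t12)); rewrite // mulrC.
move=> Ht1 Ht2 Hs1 Hs2 e1 e2 Hp.
pose hd := fun s => (d s).2.
pose P y := [set s : R | 0 <= s <= 1 /\ hd s = y].
pose g y := xget 0 (P y).
have gP : forall y, (exists s, P y s) -> P y (g y).
  move=> y [s Ps]; rewrite /g; case: xgetP => // /(_ s Ps) [].
have gK : {in `[0, 1], cancel hd g}.
  move=> s; rewrite in_itv /= => s01.
  have [] := gP (hd s) (ex_intro _ s (conj s01 erefl)) => g01 e.
  exact: gc_inj gd g01 s01 e.
have hdc : {within `[0, 1], continuous hd}.
  by apply: gc_cont2 => //; exact: itv_sub01.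
have gc' := segment_can_le_continuous ler01 hdc gK.
have hd01 : hd 0 <= hd 1 by exact: (gc_le gd (lexx (0:R)) ler01 (lexx (1:R))).
have rng : forall y, hd 0 <= y <= hd 1 -> P y (g y).
  move=> y /andP[a b]; apply: gP.
  have [] := @curve_ivt R d 0 1 y gd; first by rewrite lexx ler01.
    by rewrite lexx ler01.
    rewrite /hd in a b; nra.
  by move=> s [s01 e]; exists s.
case/andP: Ht1 => t10 t11; case/andP: Ht2 => t20 t21.
case/andP: Hs1 => s10 s11; case/andP: Hs2 => s20 s21.
have ct_rng : forall t, t1 <= t <= t2 -> hd 0 <= (c t).2 <= hd 1.
  move=> t /andP[a b]; apply/andP; split.
    apply: (le_trans (gc_le gd (lexx (0:R)) s10 s11)).
    rewrite e1; exact: (gc_le gc t10 a (le_trans b t21)).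
  apply: (@le_trans _ _ (hd s2)); last exact: (gc_le gd s20 s21 (lexx (1:R))).
  rewrite /hd e2; exact: (gc_le gc (le_trans t10 a) b t21).
pose F t := (c t).1 - (d (g (c t).2)).1.
have Fc : {within `[t1, t2], continuous F}.
  move=> x; apply: (@continuousB R R^o (subspace `[t1, t2]%classic) (fun t => (c t).1) (fun t => (d (g (c t).2)).1) x).
    exact: (gc_cont1 gc (itv_sub01 t10 t21)).
  have h1 : {within `[t1, t2], continuous (g \o (fun t => (c t).2))}.
    apply: (@within_comp2 _ _ _ _ `[hd 0, hd 1]%classic _ _ _ (gc_cont2 gc (itv_sub01 t10 t21)) gc').
    by move=> t; rewrite /= !in_itv /=; exact: ct_rng.
  have h2 := @within_comp2 _ _ _ `[t1, t2]%classic [set r : R | 0 <= r <= 1]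
    _ (fun s => (d s).1) _ h1 (gc_cont1 gd (@subset_refl _ _)).
  apply: h2.
  move=> t; rewrite /= in_itv /= => /ct_rng /rng [] //.
have gs1 : g (c t1).2 = s1.
  by rewrite -e1; apply: gK; rewrite in_itv /= s10 s11.
have gs2 : g (c t2).2 = s2.
  by rewrite -e2; apply: gK; rewrite in_itv /= s20 s21.
have [|t] := @IVT R F t1 t2 0 t12 Fc.
  rewrite /F gs1 gs2 ge_min le_max.
  case: (lerP ((c t1).1 - (d s1).1) 0) => /= H1;
  case: (lerP 0 ((c t2).1 - (d s2).1)) => /= H2;
    rewrite ?orbT ?andbT ?orbF /=; try done; try (apply/andP; split); nra.
rewrite in_itv /= => /andP[a b] Ft.
have [g01 hg] := rng _ (ct_rng _ (introT andP (conj a b))).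
exists t, (g (c t).2); split => //.
  by apply/andP; split; [exact: le_trans a | exact: le_trans t21].
rewrite [c t]surjective_pairing [d _]surjective_pairing.
congr (_, _); last exact: esym hg.
by move: Ft; rewrite /F => /eqP; rewrite subr_eq0 => /eqP.
Qed.

Lemma core_img (R : realType) (c d : R -> R * R) p1 p2 q1 q2 :
  gcurve c -> gcurve d -> img d p1 -> img d p2 -> img c q1 -> img c q2 ->
  p1.2 = q1.2 -> p2.2 = q2.2 -> (p1.1 - q1.1) * (p2.1 - q2.1) < 0 ->
  exists q, img c q /\ img d q.
Proof.
move=> gc gd [s1 [Hs1 ->]] [s2 [Hs2 ->]] [t1 [Ht1 ->]] [t2 [Ht2 ->]] e1 e2 Hp.
have [t [s [Ht Hs e]]] := core gc gd Ht1 Ht2 Hs1 Hs2 e1 e2 Hp.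
by exists (c t); split; [exists t | exists s].
Qed.

Definition edges_ok (R : realType) (V : finType) (E : rel V) (D : drawing R V) :=
  forall u v, E u v -> [/\ gcurve (ecurve D u v), ecurve D u v 0 = vpos D u &
                          ecurve D u v 1 = vpos D v].

Lemma upward_ok (R : realType) (V : finType) (E : rel V) (D : drawing R V) :
  upward_planar_drawing E D -> edges_ok E D.
Proof.
move=> [_ [H _]] u v /H [h0 h1 hc hm]; split => //.
Qed.

Section Paths.
Variables (R : realType) (V : finType) (E : rel V) (D : drawing R V).
Hypothesis Hok : edges_ok E D.

Lemma edge_bounds u v p : E u v -> edge_img D u v p ->
  [/\ (vpos D u).2 <= p.2, p.2 <= (vpos D v).2 &
      p = vpos D u \/ (vpos D u).2 < p.2].
Proof.
move=> /Hok [gc e0 e1] [t [/andP[t0 t1] ->]].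
rewrite -e0 -e1; split.
- exact: gc_le gc (lexx (0:R)) t0 t1.
- exact: gc_le gc t0 t1 (lexx (1:R)).
- case: (ltgtP 0 t) t0 => // [t0' _|<- _]; last by left.
  by right; case: gc => _ h; apply: h.
Qed.

Lemma edge_img0 u v : E u v -> edge_img D u v (vpos D u).
Proof. by move=> /Hok [_ e0 _]; exists 0; rewrite lexx ler01 e0. Qed.

Lemma edge_img1 u v : E u v -> edge_img D u v (vpos D v).
Proof. by move=> /Hok [_ _ e1]; exists 1; rewrite lexx ler01 e1. Qed.

Lemma pts_cons x v s p : E x v ->
  path_pts D x (v :: s) p <-> edge_img D x v p \/ path_pts D v s p.
Proof.
move=> Exv; split.
  case=> [[w]|[u [w []]]].
    rewrite in_cons => /orP[/eqP -> ->|ws ->]; first by left; exact: edge_img0.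
    by right; left; exists w.
  rewrite /= in_cons => /orP[/eqP [-> ->] h|uw h]; first by left.
  by right; right; exists u, w.
case=> [h|[[w ws ->]|[u [w [uw h]]]]].
  by right; exists x, v; rewrite /= in_cons eqxx.
  by left; exists w => //; rewrite in_cons ws orbT.
by right; exists u, w; rewrite /= in_cons uw orbT.
Qed.

Lemma pts_nil x p : path_pts D x [::] p -> p = vpos D x.
Proof.
case=> [[w]|[u [w []]]]; last by [].
by rewrite inE => /eqP ->.
Qed.

Lemma pts_head x s : path_pts D x s (vpos D x).
Proof. by left; exists x; rewrite ?inE ?eqxx. Qed.

Lemma pts_above x s p : path E x s -> path_pts D x s p ->
  p = vpos D x \/ (vpos D x).2 < p.2.
Proof.
elim: s x p => [|v s IH] x p /=; first by move=> _ /pts_nil ->; left.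
case/andP=> Exv ps /(pts_cons _ _ Exv) [/(edge_bounds Exv) [_ _ //]|h].
right; have [_ _ [e|lt]] := edge_bounds Exv (edge_img1 Exv).
  have := (Hok Exv); case=> [[_ hm] e0 e1].
  move: e; rewrite -e0 -e1 => e.
  by have := hm 0 1 (lexx 0) ltr01 (lexx 1); rewrite e ltxx.
case: (IH v p ps h) => [->//|lt2]; exact: lt_trans lt2.
Qed.

Lemma pts_uniq x s p p' : path E x s -> path_pts D x s p -> path_pts D x s p' ->
  p.2 = p'.2 -> p = p'.
Proof.
elim: s x p p' => [|v s IH] x p p' /=.
  by move=> _ /pts_nil -> /pts_nil ->.
case/andP=> Exv ps; have [gc _ _] := Hok Exv.
have key : forall q q', edge_img D x v q -> path_pts D v s q' -> q.2 = q'.2 -> q = q'.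
  move=> q q' hq hq' e.
  have [_ qv _] := edge_bounds Exv hq.
  case: (pts_above ps hq') => [eq'|lt].
    subst q'; apply: img_eq gc hq (edge_img1 Exv) e.
  by move: qv; rewrite e leNgt lt.
move=> /(pts_cons _ _ Exv) [h1|h1] /(pts_cons _ _ Exv) [h2|h2] e.
- exact: img_eq gc h1 h2 e.
- exact: key.
- by apply/esym/key => //.
- exact: IH ps h1 h2 e.
Qed.

Lemma exist_pt x s p1 p2 h : path E x s -> path_pts D x s p1 -> path_pts D x s p2 ->
  (p1.2 - h) * (p2.2 - h) <= 0 -> exists p, path_pts D x s p /\ p.2 = h.
Proof.
elim: s x p1 p2 => [|v s IH] x p1 p2 /=.
  move=> _ /pts_nil -> /pts_nil -> H; exists (vpos D x); split; first exact: pts_head.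
  nra.
case/andP=> Exv ps; have [gc _ _] := Hok Exv.
have ed : forall q1 q2, edge_img D x v q1 -> edge_img D x v q2 ->
    (q1.2 - h) * (q2.2 - h) <= 0 -> exists p, path_pts D x (v :: s) p /\ p.2 = h.
  move=> q1 q2 [t1 [Ht1 ->]] [t2 [Ht2 ->]] H.
  have [t [Ht e]] := curve_ivt gc Ht1 Ht2 H.
  by exists (ecurve D x v t); split => //; apply/(pts_cons _ _ Exv); left; exists t.
have rs : forall q1 q2, path_pts D v s q1 -> path_pts D v s q2 ->
    (q1.2 - h) * (q2.2 - h) <= 0 -> exists p, path_pts D x (v :: s) p /\ p.2 = h.
  move=> q1 q2 h1 h2 H; have [p [hp e]] := IH v q1 q2 ps h1 h2 H.
  by exists p; split => //; apply/(pts_cons _ _ Exv); right.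
have key : forall q1 q2, edge_img D x v q1 -> path_pts D v s q2 ->
    (q1.2 - h) * (q2.2 - h) <= 0 -> exists p, path_pts D x (v :: s) p /\ p.2 = h.
  move=> q1 q2 h1 h2 H.
  have [_ b1 _] := edge_bounds Exv h1.
  have b2 : (vpos D v).2 <= q2.2.
    by case: (pts_above ps h2) => [->//|/ltW].
  case: (lerP 0 ((vpos D v).2 - h)) => hw.
    apply: (ed q1 (vpos D v)) => //; first exact: edge_img1.
    case: (ltrP 0 (q2.2 - h)) => hb.
      have ha : q1.2 - h <= 0 by nra.
      nra.
    have -> : (vpos D v).2 - h = 0 by lra.
    by rewrite mulr0.
  apply: (rs (vpos D v) q2) => //; first exact: pts_head.
  have ha : q1.2 - h < 0 by lra.
  have hb : 0 <= q2.2 - h by nra.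
  nra.
move=> /(pts_cons _ _ Exv) [h1|h1] /(pts_cons _ _ Exv) [h2|h2] H.
- exact: ed h1 h2 H.
- exact: key h1 h2 H.
- by apply: key h2 h1 _; rewrite mulrC.
- exact: rs h1 h2 H.
Qed.

Lemma sign3 (a b w : R) : a * b < 0 -> w != 0 -> a * w < 0 \/ w * b < 0.
Proof.
move=> H; rewrite neq_lt => /orP[w0|w0].
  case: (ltrP 0 a) => ha; [by left; nra | right; have hb : 0 < b by nra].
  all: try nra.
case: (ltrP a 0) => ha; [by left; nra | right; have hb : b < 0 by nra].
nra.
Qed.

Lemma pair_eq1 (p q : R * R) : p.1 = q.1 -> p.2 = q.2 -> p = q.
Proof. by case: p q => [a b] [c d] /= -> ->. Qed.

Lemma edge_path (c : R -> R * R) x s : gcurve c -> path E x s ->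
  forall p1 p2 q1 q2, path_pts D x s p1 -> path_pts D x s p2 ->
  img c q1 -> img c q2 -> p1.2 = q1.2 -> p2.2 = q2.2 ->
  (p1.1 - q1.1) * (p2.1 - q2.1) < 0 ->
  exists q, img c q /\ path_pts D x s q.
Proof.
move=> gc; elim: s x => [|v s IH] x /=.
  move=> _ p1 p2 q1 q2 /pts_nil -> /pts_nil -> h1 h2 e1 e2 H.
  have eq : q1 = q2 := img_eq gc h1 h2 (etrans (esym e1) e2).
  by rewrite eq -expr2 ltNge sqr_ge0 in H.
case/andP=> Exv ps; have [gd _ _] := Hok Exv.
have key : forall p1 p2 q1 q2, edge_img D x v p1 -> path_pts D v s p2 ->
    img c q1 -> img c q2 -> p1.2 = q1.2 -> p2.2 = q2.2 ->
    (p1.1 - q1.1) * (p2.1 - q2.1) < 0 ->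
    exists q, img c q /\ path_pts D x (v :: s) q.
  move=> p1 p2 q1 q2 h1 h2 [t1 [Ht1 eq1]] [t2 [Ht2 eq2]] e1 e2 H.
  have [_ b1 _] := edge_bounds Exv h1.
  have b2 : (vpos D v).2 <= p2.2.
    by case: (pts_above ps h2) => [->//|/ltW].
  have [tv [Htv ev]] : exists t, 0 <= t <= 1 /\ (c t).2 = (vpos D v).2.
    apply: curve_ivt gc Ht1 Ht2 _; rewrite -eq1 -eq2 -e1 -e2; nra.
  have [eqx|nex] := eqVneq ((vpos D v).1 - (c tv).1) 0.
    exists (c tv); split; first by exists tv.
    apply/(pts_cons _ _ Exv); right.
    have -> : c tv = vpos D v.
      by apply: pair_eq1 => //; move/eqP: eqx; rewrite subr_eq0 => /eqP.
    exact: pts_head.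
  case: (sign3 H nex) => H'.
    have [q [hq hq']] := core_img gc gd h1 (edge_img1 Exv) (ex_intro _ t1 (conj Ht1 eq1))
      (ex_intro _ tv (conj Htv erefl)) e1 (esym ev) H'.
    by exists q; split => //; apply/(pts_cons _ _ Exv); left.
  have [q [hq hq']] := IH v ps (vpos D v) p2 (c tv) q2 (pts_head _ _) h2
      (ex_intro _ tv (conj Htv erefl)) (ex_intro _ t2 (conj Ht2 eq2)) (esym ev) e2 H'.
  by exists q; split => //; apply/(pts_cons _ _ Exv); right.
move=> p1 p2 q1 q2 /(pts_cons _ _ Exv) [h1|h1] /(pts_cons _ _ Exv) [h2|h2]
  hq1 hq2 e1 e2 H.
- have [q [hq hq']] := core_img gc gd h1 h2 hq1 hq2 e1 e2 H.
  by exists q; split => //; apply/(pts_cons _ _ Exv); left.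
- exact: key h1 h2 hq1 hq2 e1 e2 H.
- by apply: key h2 h1 hq2 hq1 e2 e1 _; rewrite mulrC.
- have [q [hq hq']] := IH v ps p1 p2 q1 q2 h1 h2 hq1 hq2 e1 e2 H.
  by exists q; split => //; apply/(pts_cons _ _ Exv); right.
Qed.

Lemma path_path x s y t : path E x s -> path E y t ->
  forall p1 p2 q1 q2, path_pts D x s p1 -> path_pts D x s p2 ->
  path_pts D y t q1 -> path_pts D y t q2 -> p1.2 = q1.2 -> p2.2 = q2.2 ->
  (p1.1 - q1.1) * (p2.1 - q2.1) < 0 ->
  exists q, path_pts D x s q /\ path_pts D y t q.
Proof.
move=> ps; elim: t y => [|z t IH] y /=.
  move=> _ p1 p2 q1 q2 h1 h2 /pts_nil -> /pts_nil -> e1 e2 H.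
  have eq : p1 = p2 by apply: pts_uniq ps h1 h2 _; rewrite e1 e2.
  by rewrite eq -expr2 ltNge sqr_ge0 in H.
case/andP=> Eyz qs; have [gc _ _] := Hok Eyz.
have key : forall p1 p2 q1 q2, path_pts D x s p1 -> path_pts D x s p2 ->
    edge_img D y z q1 -> path_pts D z t q2 -> p1.2 = q1.2 -> p2.2 = q2.2 ->
    (p1.1 - q1.1) * (p2.1 - q2.1) < 0 ->
    exists q, path_pts D x s q /\ path_pts D y (z :: t) q.
  move=> p1 p2 q1 q2 h1 h2 hq1 hq2 e1 e2 H.
  have [_ b1 _] := edge_bounds Eyz hq1.
  have b2 : (vpos D z).2 <= q2.2.
    by case: (pts_above qs hq2) => [->//|/ltW].
  have [pz [hpz ez]] : exists p, path_pts D x s p /\ p.2 = (vpos D z).2.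
    apply: exist_pt ps h1 h2 _; rewrite e1 e2; nra.
  have [eqx|nex] := eqVneq (pz.1 - (vpos D z).1) 0.
    exists pz; split => //; apply/(pts_cons _ _ Eyz); right.
    have -> : pz = vpos D z.
      by apply: pair_eq1 => //; move/eqP: eqx; rewrite subr_eq0 => /eqP.
    exact: pts_head.
  case: (sign3 H nex) => H'.
    have [q [hq hq']] := edge_path gc ps h1 hpz hq1 (edge_img1 Eyz) e1 ez H'.
    by exists q; split => //; apply/(pts_cons _ _ Eyz); left.
  have [q [hq hq']] := IH z qs pz p2 (vpos D z) q2 hpz h2 (pts_head _ _) hq2 ez e2 H'.
  by exists q; split => //; apply/(pts_cons _ _ Eyz); right.
move=> p1 p2 q1 q2 h1 h2 /(pts_cons _ _ Eyz) [hq1|hq1] /(pts_cons _ _ Eyz) [hq2|hq2]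
  e1 e2 H.
- have [q [hq hq']] := edge_path gc ps h1 h2 hq1 hq2 e1 e2 H.
  by exists q; split => //; apply/(pts_cons _ _ Eyz); left.
- exact: key h1 h2 hq1 hq2 e1 e2 H.
- by apply: key h2 h1 hq2 hq1 e2 e1 _; rewrite mulrC.
- have [q [hq hq']] := IH z qs p1 p2 q1 q2 h1 h2 hq1 hq2 e1 e2 H.
  by exists q; split => //; apply/(pts_cons _ _ Eyz); right.
Qed.

End Paths.

Lemma zip_path (V : finType) (E : rel V) x s u w : path E x s ->
  (u, w) \in zip (x :: s) s -> [/\ E u w, u \in x :: s & w \in x :: s].
Proof.
elim: s x => [|v s IH] x //= /andP[Exv ps].
rewrite in_cons => /orP[/eqP [-> ->]|h].
  by split => //; rewrite !in_cons eqxx ?orbT.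
have [Euw hu hw] := IH v ps h.
by split => //; rewrite in_cons ?hu ?hw orbT.
Qed.

Lemma vert_on_edge (R : realType) (V : finType) (E : rel V) (D : drawing R V)
  u v w t : upward_planar_drawing E D -> E u v -> 0 <= t <= 1 ->
  vpos D w = ecurve D u v t -> w = u \/ w = v.
Proof.
move=> [inj [edg [thr _]]] Euv /andP[t0 t1] e.
have [e0 e1 _ _] := edg _ _ Euv.
case: (ltgtP 0 t) => t0'.
- case: (ltgtP t 1) => t1'.
  + by exfalso; apply: (thr u v w t Euv); [rewrite t0' t1' | rewrite e].
  + by move: t1; rewrite leNgt t1'.
  + by right; apply: inj; rewrite e t1' e1.
- by move: t0; rewrite leNgt t0'.
- by left; apply: inj; rewrite e -t0' e0.
Qed.

Lemma disj (R : realType) (V : finType) (E : rel V) (D : drawing R V) x s y t :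
  upward_planar_drawing E D -> path E x s -> path E y t ->
  (forall v, v \in x :: s -> v \notin y :: t) ->
  forall p, path_pts D x s p -> path_pts D y t p -> False.
Proof.
move=> HD ps qs dj p.
have HD' := HD; case: HD' => [inj [edg [thr pl]]].
case=> [[w1 hw1 ->]|[u1 [v1 [z1 [t1 [Ht1 e1]]]]]].
  case=> [[w2 hw2 e]|[u2 [v2 [z2 [t2 [Ht2 e2]]]]]].
    by move: (dj _ hw1); rewrite (inj _ _ e) hw2.
  have [Euv hu hv] := zip_path qs z2.
  case: (vert_on_edge HD Euv Ht2 e2) => ew; move: (dj _ hw1); rewrite ew ?hu ?hv //.
have [Euv1 hu1 hv1] := zip_path ps z1.
case=> [[w2 hw2 e]|[u2 [v2 [z2 [t2 [Ht2 e2]]]]]].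
  case: (vert_on_edge HD Euv1 Ht1 (etrans (esym e) e1)) => ew.
    by move: (dj _ hu1); rewrite -ew hw2.
  by move: (dj _ hv1); rewrite -ew hw2.
have [Euv2 hu2 hv2] := zip_path qs z2.
have ne : (u1, v1) <> (u2, v2).
  by case=> eu _; move: (dj _ hu1); rewrite eu hu2.
have [w [hw1 hw2 _]] := pl u1 v1 u2 v2 p Euv1 Euv2 ne
  (ex_intro _ t1 (conj Ht1 e1)) (ex_intro _ t2 (conj Ht2 e2)).
have wP : w \in x :: s.
  by move: hw1; rewrite !inE => /orP[/eqP->|/eqP->]; [exact: hu1 | exact: hv1].
have wQ : w \in y :: t.
  by move: hw2; rewrite !inE => /orP[/eqP->|/eqP->]; [exact: hu2 | exact: hv2].
by move: (dj _ wP); rewrite wQ.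
Qed.

Theorem lemma5 (R : realType) (V : finType) (E : rel V) (D : drawing R V)
  (x : V) (s : seq V) (y : V) (t : seq V) :
  upward_planar_drawing E D ->
  dipath E x s -> dipath E y t ->
  (forall v : V, v \in x :: s -> v \notin y :: t) ->
  RightP D x s `&` path_pts D y t = set0 \/
  LeftP D x s `&` path_pts D y t = set0.
Proof.
move=> HD /andP[ps _] /andP[qs _] dj.
have ok := upward_ok HD.
have plast : path_pts D x s (vpos D (last x s)).
  by left; exists (last x s) => //; exact: mem_last.
have key : forall q1 q2, RightP D x s q1 -> path_pts D y t q1 ->
    LeftP D x s q2 -> path_pts D y t q2 -> False.
  move=> q1 q2 [/andP[a1 b1] R1] hq1 [/andP[a2 b2] L2] hq2.
  have [p [hp ep]] := exist_pt ok (h := q1.2) ps (pts_head D x s) plast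
    ltac:(nra).
  have [p' [hp' ep']] := exist_pt ok (h := q2.2) ps (pts_head D x s) plast
    ltac:(nra).
  have l1 := R1 p hp ep; have l2 := L2 p' hp' ep'.
  have [q [hqP hqQ]] := path_path ok ps qs hp hp' hq1 hq2 ep ep' ltac:(nra).
  exact: (disj HD ps qs dj hqP hqQ).
case: (pselect (exists q, (RightP D x s `&` path_pts D y t) q)) => [[q1 [r1 h1]]|nR].
  right; rewrite -subset0 => q2 [l2 h2]; exact: key q1 q2 r1 h1 l2 h2.
left; rewrite -subset0 => q1 h1; apply: nR; by exists q1.
Qed.
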